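(* Let $\mathcal M$ be a first-order structure equipped with a dimension satisfying axioms A1–A2. Let $(X_a)_{a\in A}$ be a uniformly definable family of sets indexed by a definable set $A$, with $X_a=X_{a'}$ if and only if $a=a'$. Let $U=\bigcup_{a\in A}X_a$ and, for $0\leq r\leq\dim(A)$, let $U_r=\{x\in U: \dim(\{a\in A: x\in X_a\})=r\}$ and $[X_a]_r=X_a\cap U_r$. Suppose that for some such $r$, $[X_a]_r$ is nonempty and $\dim([X_a]_r)$ does not depend on $a\in A$. Then $\dim(U_r)+r=\dim(A)+\dim([X_a]_r)$.
   Context: The dimension assigns to each nonempty definable set a natural number such that: (A1) if $f:B\to C$ is definable between nonempty definable sets, then $\{c\in C:\dim(f^{-1}(c))=m\}$ is definable for every $m$; (A2) if $f:B\to C$ is definable and all its fibers have dimension $m$, then $\dim B=\dim f(B)+m$. (By A1 the sets $U_r$ and $[X_a]_r$ are definable.) *)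

(* Defs.v *)
From HB Require Import structures.
From mathcomp Require Import all_boot.
From mathcomp Require Import boolp classical_sets.
Set Implicit Arguments. Unset Strict Implicit. Unset Printing Implicit Defensive.
Local Open Scope classical_set_scope.

Definition coord_map (M : Type) (n m : nat) (s : 'I_m -> 'I_n)
  (x : n.-tuple M) : m.-tuple M := [tuple tnth x (s i) | i < m].

Definition graph_on (M : Type) (n m : nat) (B : set (n.-tuple M))
  (f : n.-tuple M -> m.-tuple M) : set ((n + m).-tuple M) :=
  [set t | exists2 b, B b & t = cat_tuple b (f b)].

(* A first-order structure with universe M, presented through its family of
   definable sets (with parameters) Def n ⊆ P(M^n), given by the standard
   closure properties, together with a dimension satisfying A1 and A2. *)
Unset Implicit Arguments.
Record dimStructure (M : Type) := DimStructure {
  Def : forall n, set (n.-tuple M) -> Prop;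
  Def_setT : forall n, Def n setT;
  Def_setC : forall n (A : set (n.-tuple M)), Def n A -> Def n (~` A);
  Def_setU : forall n (A B : set (n.-tuple M)), Def n A -> Def n B -> Def n (A `|` B);
  Def_diag : Def 2 [set x | tnth x ord0 = tnth x ord_max];
  Def_point : forall c : M, Def 1 [set x | tnth x ord0 = c];
  Def_preim : forall n m (s : 'I_m -> 'I_n) (A : set (m.-tuple M)),
      Def m A -> Def n (coord_map s @^-1` A);
  Def_image : forall n m (s : 'I_m -> 'I_n) (A : set (n.-tuple M)),
      Def n A -> Def m (coord_map s @` A);
  dim : forall n, set (n.-tuple M) -> nat;
  dim_A1 : forall n m (B : set (n.-tuple M)) (C : set (m.-tuple M))
      (f : n.-tuple M -> m.-tuple M) (k : nat),
      Def n B -> Def m C -> B !=set0 -> C !=set0 ->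
      (forall b, B b -> C (f b)) -> Def (n + m) (graph_on B f) ->
      Def m [set c | C c /\ (f @` B) c /\ dim n (B `&` f @^-1` [set c]) = k];
  dim_A2 : forall n m (B : set (n.-tuple M)) (C : set (m.-tuple M))
      (f : n.-tuple M -> m.-tuple M) (k : nat),
      Def n B -> Def m C -> B !=set0 -> C !=set0 ->
      (forall b, B b -> C (f b)) -> Def (n + m) (graph_on B f) ->
      (forall c, (f @` B) c -> dim n (B `&` f @^-1` [set c]) = k) ->
      dim n B = dim m (f @` B) + k
}.
Set Implicit Arguments.
Arguments Def {M} d {n} _ : rename.
Arguments dim {M} d {n} _ : rename.

Section Family.
Variables (M : Type) (S : dimStructure M) (k n : nat).
Variables (A : set (k.-tuple M)) (X : set ((k + n).-tuple M)).

Definition fam (a : k.-tuple M) : set (n.-tuple M) := [set x | X (cat_tuple a x)].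
Definition famU : set (n.-tuple M) := [set x | exists2 a, A a & fam a x].
Definition famIdx (x : n.-tuple M) : set (k.-tuple M) := [set a | A a /\ fam a x].
Definition famUr (r : nat) : set (n.-tuple M) :=
  [set x | famU x /\ dim S (famIdx x) = r].
Definition layer (r : nat) (a : k.-tuple M) : set (n.-tuple M) := fam a `&` famUr r.
End Family.

(* Main.v *)
Require Import Defs.
From HB Require Import structures.
From mathcomp Require Import all_boot.
From mathcomp Require Import boolp classical_sets.
From Stdlib Require Import Lia.
Local Open Scope classical_set_scope.
Set Implicit Arguments. Unset Strict Implicit.

Section Aux.
Variables (M : Type) (S : dimStructure M).

Lemma DC n (A : set (n.-tuple M)) : Def S A -> Def S (~` A).
Proof. exact: Def_setC. Qed.
Lemma DU n (A B : set (n.-tuple M)) : Def S A -> Def S B -> Def S (A `|` B).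
Proof. exact: Def_setU. Qed.
Lemma DP n m (s : 'I_m -> 'I_n) (A : set (m.-tuple M)) : Def S A -> Def S (coord_map s @^-1` A).
Proof. exact: Def_preim. Qed.
Lemma DI n m (s : 'I_m -> 'I_n) (A : set (n.-tuple M)) : Def S A -> Def S (coord_map s @` A).
Proof. exact: Def_image. Qed.

Lemma DefE n (A B : set (n.-tuple M)) : Def S A -> A = B -> Def S B.
Proof. by move=> h <-. Qed.

Lemma Def_setI n (A B : set (n.-tuple M)) : Def S A -> Def S B -> Def S (A `&` B).
Proof.
move=> hA hB.
apply: (DefE (DC (DU (DC hA) (DC hB)))).
by rewrite setCU !setCK.
Qed.

Lemma Def_bigI n (I : eqType) (l : seq I) (P : I -> set (n.-tuple M)) :
  (forall i, Def S (P i)) -> Def S [set x | forall i, i \in l -> P i x].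
Proof.
move=> hP; elim: l => [|j l IH].
  apply: (DefE (Def_setT _ S n)).
  by apply/funext => x; apply/propext; split.
apply: (DefE (Def_setI (hP j) IH)).
apply/funext => x; apply/propext; split.
  by move=> [Hj Hl] i; rewrite inE => /orP [/eqP ->|/Hl].
move=> H; split; first by apply: H; rewrite inE eqxx.
by move=> i Hi; apply: H; rewrite inE Hi orbT.
Qed.

Lemma coord_mapE n m (s : 'I_m -> 'I_n) (x : n.-tuple M) i :
  tnth (coord_map s x) i = tnth x (s i).
Proof. by rewrite tnth_mktuple. Qed.

Definition pair_map n (i j : 'I_n) : 'I_2 -> 'I_n :=
  fun t => if t == ord0 then i else j.

Lemma Def_eqc n (i j : 'I_n) : Def S [set x | tnth x i = tnth x j].
Proof.
apply: (DefE (DP (pair_map i j) (Def_diag _ S))).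
apply/funext => x; apply/propext.
by rewrite /= !coord_mapE /pair_map /=.
Qed.

Lemma Def_const n (i : 'I_n) c : Def S [set x | tnth x i = c].
Proof.
apply: (DefE (DP (fun _ : 'I_1 => i) (Def_point _ S c))).
apply/funext => x; apply/propext.
by rewrite /= !coord_mapE.
Qed.

Lemma Def_single n (p : n.-tuple M) : Def S [set p].
Proof.
apply: (DefE (Def_bigI (enum 'I_n) (fun i => Def_const i (tnth p i)))).
apply/funext => x; apply/propext; split => /=.
  by move=> H; apply: eq_from_tnth => i; apply: H; rewrite mem_enum.
by move=> -> i.
Qed.

Lemma Def_coord_eq n m (s : 'I_m -> 'I_n) y : Def S [set x | coord_map s x = y].
Proof. exact: (DP s (Def_single y)). Qed.

Variables k n : nat.
Definition lpart : (k + n).-tuple M -> k.-tuple M := coord_map (@lshift k n).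
Definition rpart : (k + n).-tuple M -> n.-tuple M := coord_map (@rshift k n).

Lemma lpart_cat a x : lpart (cat_tuple a x) = a.
Proof. by apply: eq_from_tnth => i; rewrite coord_mapE; exact: tnth_lshift. Qed.
Lemma rpart_cat a x : rpart (cat_tuple a x) = x.
Proof. by apply: eq_from_tnth => i; rewrite coord_mapE; exact: tnth_rshift. Qed.
Lemma lcat (a : k.-tuple M) (x : n.-tuple M) : coord_map (@lshift k n) (cat_tuple a x) = a.
Proof. exact: lpart_cat. Qed.
Lemma rcat (a : k.-tuple M) (x : n.-tuple M) : coord_map (@rshift k n) (cat_tuple a x) = x.
Proof. exact: rpart_cat. Qed.
Lemma cat_part t : t = cat_tuple (lpart t) (rpart t).
Proof.
apply: eq_from_tnth => i; rewrite -(splitK i); case: (split i) => j /=.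
  by rewrite (tnth_lshift (lpart t) (rpart t)) coord_mapE.
by rewrite (tnth_rshift (lpart t) (rpart t)) coord_mapE.
Qed.
End Aux.

Section Aux2.
Variables (M : Type) (S : dimStructure M).

Lemma Def_graph N m (s : 'I_m -> 'I_N) (B : set (N.-tuple M)) :
  Def S B -> Def S (graph_on B (coord_map s)).
Proof.
move=> hB.
apply: (DefE (Def_setI (DP (@lshift N m) hB)
   (Def_bigI (enum 'I_m) (fun i => Def_eqc S (rshift N i) (lshift m (s i)))))).
apply/funext => t; apply/propext; split => /=.
  move=> [Bl H]; exists (lpart t) => //.
  rewrite {1}(cat_part t); congr cat_tuple.
  apply: eq_from_tnth => i; rewrite !coord_mapE; apply: H; by rewrite mem_enum.
move=> [b Bb ->]; split; first by rewrite -/(@lpart _ N m _) lpart_cat.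
move=> i _.
by rewrite (tnth_rshift b (coord_map s b)) (tnth_lshift b (coord_map s b)) coord_mapE.
Qed.

Lemma coord_map_id n (x : n.-tuple M) : coord_map id x = x.
Proof. by apply: eq_from_tnth => i; rewrite coord_mapE. Qed.

Lemma dim_single n (p : n.-tuple M) : dim S [set p] = 0.
Proof.
have e : coord_map id @` [set p] = [set p].
  apply/funext => x; apply/propext; split => /=.
    by move=> [y -> <-]; rewrite coord_map_id.
  by move=> ->; exists p => //; rewrite coord_map_id.
have h := @dim_A2 M S n n [set p] [set p] (coord_map id) (dim S [set p]) (Def_single S p) (Def_single S p)
  (ex_intro _ p erefl) (ex_intro _ p erefl)
  (fun b hb => eq_ind_r _ hb (coord_map_id b)) (Def_graph id (Def_single S p)).
rewrite e in h.
suff : dim S [set p] = dim S [set p] + dim S [set p].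
  by move/eqP; rewrite -{1}(addn0 (dim S [set p])) eqn_add2l => /eqP.
apply: h => c /= ->.
congr (dim S _); apply/funext => x; apply/propext; split => /=.
  by case.
by move=> ->; split=> //; rewrite coord_map_id.
Qed.

Lemma dim_inj N m (s : 'I_m -> 'I_N) (B : set (N.-tuple M)) :
  Def S B -> B !=set0 ->
  (forall b b', B b -> B b' -> coord_map s b = coord_map s b' -> b = b') ->
  dim S B = dim S (coord_map s @` B).
Proof.
move=> hB [b0 Bb0] inj.
rewrite -[RHS]addn0.
apply: (@dim_A2 M S N m B (coord_map s @` B) (coord_map s) 0 hB (DI s hB)
  (ex_intro _ b0 Bb0) (ex_intro _ (coord_map s b0) (ex_intro2 _ _ b0 Bb0 erefl))
  (fun b hb => ex_intro2 _ _ b hb erefl) (Def_graph s hB)).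
move=> c [b Bb <-].
rewrite (_ : _ `&` _ = [set b]); first exact: dim_single.
apply/funext => x; apply/propext; split => /=.
  by move=> [Bx ex]; apply: inj.
by move=> ->.
Qed.

Variables k n : nat.

Lemma dim_fixL (a : k.-tuple M) (Q : set (n.-tuple M)) : Def S Q -> Q !=set0 ->
  dim S [set t : (k + n).-tuple M | lpart t = a /\ Q (rpart t)] = dim S Q.
Proof.
move=> hQ [x0 Qx0].
have hD : Def S [set t : (k + n).-tuple M | lpart t = a /\ Q (rpart t)].
  exact: (Def_setI (Def_coord_eq S (@lshift k n) a) (DP (@rshift k n) hQ)).
rewrite (@dim_inj _ _ (@rshift k n)) //.
- congr (dim S _); apply/funext => x; apply/propext; split => /=.
    by move=> [t [_ Qt] <-].
  by move=> Qx; exists (cat_tuple a x); [split|]; rewrite ?lpart_cat ?rpart_cat ?lcat ?rcat.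
- by exists (cat_tuple a x0); rewrite /= lpart_cat rpart_cat.
- move=> b b' [hb _] [hb' _] e.
  rewrite (cat_part b) (cat_part b') hb hb'; congr cat_tuple; exact: e.
Qed.

Lemma dim_fixR (x : n.-tuple M) (P : set (k.-tuple M)) : Def S P -> P !=set0 ->
  dim S [set t : (k + n).-tuple M | rpart t = x /\ P (lpart t)] = dim S P.
Proof.
move=> hP [a0 Pa0].
have hD : Def S [set t : (k + n).-tuple M | rpart t = x /\ P (lpart t)].
  exact: (Def_setI (Def_coord_eq S (@rshift k n) x) (DP (@lshift k n) hP)).
rewrite (@dim_inj _ _ (@lshift k n)) //.
- congr (dim S _); apply/funext => a; apply/propext; split => /=.
    by move=> [t [_ Pt] <-].
  by move=> Pa; exists (cat_tuple a x); [split|]; rewrite ?lpart_cat ?rpart_cat ?lcat ?rcat.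
- by exists (cat_tuple a0 x); rewrite /= lpart_cat rpart_cat.
- move=> b b' [hb _] [hb' _] e.
  rewrite (cat_part b) (cat_part b') hb hb'; congr cat_tuple; exact: e.
Qed.

Lemma Def_secL (a : k.-tuple M) (P : set ((k + n).-tuple M)) : Def S P ->
  Def S [set x | P (cat_tuple a x)].
Proof.
move=> hP.
apply: (DefE (DI (@rshift k n) (Def_setI hP (Def_coord_eq S (@lshift k n) a)))).
apply/funext => x; apply/propext; split => /=.
  by move=> [t [Pt et] <-]; rewrite -et -(cat_part t).
by move=> Px; exists (cat_tuple a x); [split|]; rewrite ?lpart_cat ?rpart_cat ?lcat ?rcat.
Qed.

Lemma Def_secR (x : n.-tuple M) (P : set ((k + n).-tuple M)) : Def S P ->
  Def S [set a | P (cat_tuple a x)].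
Proof.
move=> hP.
apply: (DefE (DI (@lshift k n) (Def_setI hP (Def_coord_eq S (@rshift k n) x)))).
apply/funext => a; apply/propext; split => /=.
  by move=> [t [Pt et] <-]; rewrite -et -(cat_part t).
by move=> Pa; exists (cat_tuple a x); [split|]; rewrite ?lpart_cat ?rpart_cat ?lcat ?rcat.
Qed.
End Aux2.

Theorem proposition3p2 (M : Type) (S : dimStructure M) (k n : nat)
  (A : set (k.-tuple M)) (X : set ((k + n).-tuple M)) (r : nat) :
  Def S A -> Def S X -> A !=set0 ->
  (forall a a', A a -> A a' -> (fam X a = fam X a' <-> a = a')) ->
  (r <= dim S A)%N ->
  (forall a, A a -> layer S A X r a !=set0) ->
  (forall a a', A a -> A a' -> dim S (layer S A X r a) = dim S (layer S A X r a')) ->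
  forall a, A a ->
    (dim S (famUr S A X r) + r = dim S A + dim S (layer S A X r a))%N.
Proof.
move=> hA hX _ _ _ hne hconst a Aa.
pose lp : (k + n).-tuple M -> k.-tuple M := coord_map (@lshift k n).
pose rp : (k + n).-tuple M -> n.-tuple M := coord_map (@rshift k n).
have cp : forall t : (k + n).-tuple M, t = cat_tuple (lp t) (rp t) := @cat_part M k n.
have hIdx : forall x, Def S (famIdx A X x).
  move=> x; apply: (DefE (Def_setI hA (Def_secR x hX))); by apply/funext.
have hfam : forall a', Def S (fam X a') by move=> a'; exact: (Def_secL a' hX).
have [x0 Lx0] := hne a Aa.
have Xax0 : X (cat_tuple a x0) := Lx0.1.
pose W := [set t : (k + n).-tuple M | A (lp t) /\ X t].
have hW : Def S W := Def_setI (DP (@lshift k n) hA) hX.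
have fibW : forall x, W `&` rp @^-1` [set x] = [set t | rp t = x /\ famIdx A X x (lp t)].
  move=> x; apply/funext => t; apply/propext; split => /=.
    move=> [[Al Xt] <-]; split => //; split => //.
    by rewrite /fam /= -cp.
  move=> [e [Al Xl]]; split => //; split => //.
  by move: Xl; rewrite /fam /= -e -cp.
have imW : forall x, (rp @` W) x <-> famU A X x.
  move=> x; split.
    move=> [t [Al Xt] <-]; exists (lp t) => //.
    by rewrite /fam /= -cp.
  move=> [a' Aa' Xa']; exists (cat_tuple a' x); last exact: rcat.
  by split => //; rewrite /lp lcat.
have hU : Def S (famUr S A X r).
  have h1 := @dim_A1 M S (k + n) n W setT rp r hW (Def_setT _ S n)
    (ex_intro _ (cat_tuple a x0) (conj (eq_ind_r A Aa (lcat _ _)) Xax0))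
    (ex_intro _ x0 I) (fun _ _ => I) (Def_graph (@rshift k n) hW).
  apply: (DefE h1); apply/funext => x; apply/propext; split => /=.
    move=> [_ [/imW hx]]; rewrite fibW dim_fixR //.
    by case: hx => a' Aa' Xa'; exists a'.
  move=> [hx e]; split => //; split; first by apply/imW.
  rewrite fibW dim_fixR //.
  by case: hx => a' Aa' Xa'; exists a'.
pose Z := [set t : (k + n).-tuple M | A (lp t) /\ layer S A X r (lp t) (rp t)].
have hZ : Def S Z.
  apply: (DefE (Def_setI hW (DP (@rshift k n) hU))).
  apply/funext => t; apply/propext; split => /=.
    by move=> [[Al Xt] Ut]; split => //; split => //; rewrite /fam /= -cp.
  by move=> [Al [Xt Ut]]; split => //; split => //; move: Xt; rewrite /fam /= -cp.
have Zne : Z !=set0.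
  exists (cat_tuple a x0); rewrite /Z /= /lp /rp ?lcat ?rcat. split => //.
have hL : forall c, Def S (layer S A X r c).
  move=> c; apply: (DefE (Def_setI (hfam c) hU)); by apply/funext.
have h1 := @dim_A2 M S (k + n) k Z A lp (dim S (layer S A X r a)) hZ hA Zne
  (ex_intro _ a Aa) (fun t ht => ht.1) (Def_graph (@lshift k n) hZ).
have imZ1 : lp @` Z = A.
  apply/funext => c; apply/propext; split.
    by move=> [t [Al _] <-].
  move=> Ac; have [x Lx] := hne c Ac.
  by exists (cat_tuple c x) => //; rewrite /Z /= /lp /rp ?lcat ?rcat.
rewrite imZ1 in h1.
have e1 : dim S Z = dim S A + dim S (layer S A X r a).
  apply: h1 => c; move=> Ac.
  rewrite (_ : _ `&` _ = [set t | lp t = c /\ layer S A X r c (rp t)]).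
    by rewrite dim_fixL //; [exact: hconst | exact: hne].
  apply/funext => t; apply/propext; split => /=.
    by move=> [[_ Lt] e]; rewrite -e; split.
  by move=> [e Lt]; split => //; rewrite /Z /= e.
have h2 := @dim_A2 M S (k + n) n Z (famUr S A X r) rp r hZ hU Zne
  (ex_intro _ x0 Lx0.2) (fun t ht => (ht.2).2) (Def_graph (@rshift k n) hZ).
have imZ2 : rp @` Z = famUr S A X r.
  apply/funext => c; apply/propext; split.
    by move=> [t [_ [_ Ut]] <-].
  move=> Uc; have [[a' Aa' Xa'] _] := Uc.
  by exists (cat_tuple a' c) => //; rewrite /Z /= /lp /rp ?lcat ?rcat.
rewrite imZ2 in h2.
have e2 : dim S Z = dim S (famUr S A X r) + r.
  apply: h2 => c; move=> Uc.
  rewrite (_ : _ `&` _ = [set t | rp t = c /\ famIdx A X c (lp t)]).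
    rewrite dim_fixR //; first exact: Uc.2.
    by have [[a' Aa' Xa'] _] := Uc; exists a'.
  apply/funext => t; apply/propext; split => /=.
    move=> [[Al [Xt _]] e]; split => //; split => //.
    by move: Xt; rewrite /fam /= -e -cp.
  move=> [e [Al Xl]]; split => //; split => //; by rewrite e; split => //.
by rewrite -e1 -e2.
Qed.
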